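(* Let $\xi_1,\dots,\xi_n$ be independent real random variables with $\mathbf{E}\xi_i=0$, satisfying Bernstein's condition: there is a constant $\varepsilon>0$ such that $|\mathbf{E}\xi_i^k|\le \frac12 k!\,\varepsilon^{k-2}\mathbf{E}\xi_i^2$ for all $k\ge 3$ and $i=1,\dots,n$. Let $\sigma^2=\sum_{i=1}^n\mathbf{E}\xi_i^2$, $\Psi_n(\lambda)=\sum_{i=1}^n\log\mathbf{E}e^{\lambda\xi_i}$ and $T_n(\lambda)=\sum_{i=1}^n\frac{\mathbf{E}\xi_ie^{\lambda\xi_i}}{\mathbf{E}e^{\lambda\xi_i}}$. Then for all $0\le\lambda<\varepsilon^{-1}$, \[ \Psi_n(\lambda)\le n\log\Big(1+\frac{\lambda^2\sigma^2}{2n(1-\lambda\varepsilon)}\Big)\le\frac{\lambda^2\sigma^2}{2(1-\lambda\varepsilon)} \] and \[ -\lambda T_n(\lambda)+\Psi_n(\lambda)\ge-\frac{\lambda^2\sigma^2}{2(1-\lambda\varepsilon)^6}. \] *)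

(* Defs.v *)
From HB Require Import structures.
From mathcomp Require Import all_boot all_order all_algebra.
From mathcomp Require Import all_classical all_reals all_analysis.
Set Implicit Arguments. Unset Strict Implicit. Unset Printing Implicit Defensive.
Import Order.TTheory GRing.Theory Num.Theory.
Local Open Scope classical_set_scope.
Local Open Scope ring_scope.

(* Mutual independence of a finite family of real random variables:
   for every family of Borel sets B_i, P(\bigcap_i xi_i^-1 B_i) = prod_i P(xi_i^-1 B_i).
   (Taking B_i = setT for i outside a subfamily gives the product rule
   for every subfamily.) *)
Definition mutually_independent d (T : measurableType d) (R : realType)
  (P : probability T R) (n : nat) (xi : 'I_n -> {RV P >-> R}) : Prop :=
  forall B : 'I_n -> set R, (forall i, measurable (B i)) ->
    P (\bigcap_(i in [set: 'I_n]) (xi i @^-1` B i)) =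
    (\prod_(i < n) P (xi i @^-1` B i))%E.

(* Real value of E[X] (X assumed integrable where used). *)
Definition Ereal d (T : measurableType d) (R : realType)
  (P : probability T R) (X : T -> R) : R := fine ('E_P[X])%E.

Definition Psi d (T : measurableType d) (R : realType)
  (P : probability T R) (n : nat) (xi : 'I_n -> {RV P >-> R}) (lam : R) : R :=
  \sum_(i < n) ln (Ereal P (fun x => expR (lam * xi i x))).

Definition Tn d (T : measurableType d) (R : realType)
  (P : probability T R) (n : nat) (xi : 'I_n -> {RV P >-> R}) (lam : R) : R :=
  \sum_(i < n) (Ereal P (fun x => xi i x * expR (lam * xi i x)) /
                Ereal P (fun x => expR (lam * xi i x))).

Definition sigma2 d (T : measurableType d) (R : realType)
  (P : probability T R) (n : nat) (xi : 'I_n -> {RV P >-> R}) : R :=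
  \sum_(i < n) Ereal P (fun x => xi i x ^+ 2).

(* Main.v *)
Require Import Defs.
From HB Require Import structures.
From mathcomp Require Import all_boot all_order all_algebra.
From mathcomp Require Import all_classical all_reals all_analysis.
From mathcomp Require Import ring lra measurable_realfun.
Import Order.TTheory GRing.Theory Num.Theory.
Import numFieldNormedType.Exports.
Local Open Scope classical_set_scope.
Local Open Scope ring_scope.
Section Real.
Context {R : realType}.

Lemma geom_le (r : R) K : 0 <= r < 1 -> \sum_(j < K) r ^+ j <= (1 - r)^-1.
Proof.
move=> /andP[r0 r1].
have h : \sum_(j < K) r ^+ j * (1 - r) = 1 - r ^+ K.
  elim: K => [|K IH]; first by rewrite big_ord0 expr0 subrr.
  by rewrite big_ord_recr /= IH exprS; ring.
have r1' : 0 < 1 - r by rewrite subr_gt0.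
rewrite -(ler_pM2r r1') mulVf ?gt_eqF// big_distrl /= h.
by rewrite lerBlDr lerDl exprn_ge0.
Qed.

Lemma geom2_le (r : R) K : 0 <= r < 1 ->
  \sum_(j < K) (j.+1)%:R * r ^+ j <= ((1 - r) ^+ 2)^-1.
Proof.
move=> /andP[r0 r1].
have h : \sum_(j < K) (j.+1)%:R * r ^+ j * (1 - r) ^+ 2
   = 1 - (K.+1)%:R * r ^+ K + K%:R * r ^+ K.+1.
  elim: K => [|K IH]; first by rewrite big_ord0 !expr0 mul0r; ring.
  rewrite big_ord_recr /= IH !exprS -!natr1. ring.
have r1' : 0 < (1 - r) ^+ 2 by rewrite exprn_gt0// subr_gt0.
rewrite -(ler_pM2r r1') mulVf ?gt_eqF// big_distrl /= h.
have a0 : 0 <= r ^+ K by rewrite exprn_ge0.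
have K0 : (0:R) <= K%:R by rewrite ler0n.
have ra : r * r ^+ K <= r ^+ K by rewrite ler_piMl// ltW.
have : K%:R * (r * r ^+ K) <= K%:R * r ^+ K by rewrite ler_wpM2l.
rewrite exprS -natr1; nra.
Qed.

Definition Sx (y : R) K := \sum_(k < K) y ^+ k / (k`!)%:R.

Lemma SxE y K : Sx y K = series (exp_coeff y) K.
Proof. by rewrite /Sx /series /= big_mkord. Qed.

Lemma Sx_cvg (y : R) : Sx y @ \oo --> expR y.
Proof.
have -> : Sx y = series (exp_coeff y) by apply/funext => K; rewrite SxE.
exact: is_cvg_series_exp_coeff.
Qed.

Lemma Sx_le y K : 0 <= y -> Sx y K <= expR y.
Proof.
move=> y0; rewrite SxE; apply: nondecreasing_cvgn_le; last first.
  exact: is_cvg_series_exp_coeff.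
apply/nondecreasing_seqP => n; rewrite /series /= big_nat_recr//= lerDl.
exact: exp_coeff_ge0.
Qed.

Lemma Sx_norm y K : `|Sx y K| <= Sx `|y| K.
Proof.
rewrite /Sx; apply: (le_trans (ler_norm_sum _ _ _)); apply: ler_sum => k _.
by rewrite normrM normfV normrX (ger0_norm (ler0n _ _)).
Qed.

Lemma expR_abs_le (y : R) : expR `|y| <= expR y + expR (- y).
Proof.
case: (lerP 0 y) => y0.
  by rewrite ger0_norm// lerDl expR_ge0.
by rewrite ltr0_norm// lerDr expR_ge0.
Qed.

End Real.
Section Prob.
Context d (T : measurableType d) (R : realType) (P : probability T R).
Local Notation int f := (Rintegral P setT f).

Lemma EerealE (X : T -> R) : Ereal P X = int X.
Proof. by rewrite /Ereal unlock. Qed.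

Lemma DCR (f_ : nat -> T -> R) (f g : T -> R) :
  (forall n, measurable_fun setT (f_ n)) -> measurable_fun setT f ->
  (forall x, (fun n => f_ n x) @ \oo --> f x) ->
  P.-integrable setT (EFin \o g) -> (forall n x, `|f_ n x| <= g x) ->
  P.-integrable setT (EFin \o f) /\ (fun n => int (f_ n)) @ \oo --> int f.
Proof.
move=> mf_ mf cf ig fg.
have [] := @dominated_convergence _ _ _ P setT measurableT
  (fun n => EFin \o f_ n) (EFin \o f) (EFin \o g).
- by move=> n; apply/measurable_realfun.measurable_EFinP.
- by apply/measurable_realfun.measurable_EFinP.
- by apply: aeW => x _ /=; apply: cvg_EFin; [exact: nearW | exact: cf].
- exact: ig.
- by apply: aeW => x n _ /=; rewrite lee_fin fg.
move=> iF _ cI; split => //.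
rewrite -(fineK (integrable_fin_num measurableT iF)) in cI.
exact: (fine_cvg cI).
Qed.

End Prob.
Section Var.
Context d (T : measurableType d) (R : realType) (P : probability T R).
Local Notation int f := (Rintegral P setT f).
Variable X : T -> R.
Hypothesis mX : measurable_fun setT X.
Hypothesis iX : forall k, P.-integrable setT (fun x => (X x ^+ k)%:E).

Definition mom k := int (fun x => X x ^+ k).

Lemma int_poly (a : nat -> R) j K :
  P.-integrable setT (EFin \o (fun x => \sum_(k < K) a k * X x ^+ (k + j))) /\
  int (fun x => \sum_(k < K) a k * X x ^+ (k + j)) = \sum_(k < K) a k * mom (k + j).
Proof.
elim: K => [|K [IH1 IH2]].
  have -> : (fun x => \sum_(k < 0) a k * X x ^+ (k + j)) = cst 0.
    by apply/funext => x; rewrite big_ord0.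
  split; first exact: integrable0.
  by rewrite big_ord0 /Rintegral integral0.
have E : (fun x => \sum_(k < K.+1) a k * X x ^+ (k + j)) =
  (fun x => \sum_(k < K) a k * X x ^+ (k + j) + a K * X x ^+ (K + j)).
  by apply/funext => x; rewrite big_ord_recr.
have iK : P.-integrable setT (EFin \o (fun x => a K * X x ^+ (K + j))).
  have := integrableZl measurableT (a K) (iX (K + j)).
  by apply: (eq_integrable measurableT) => x _ /=; rewrite EFinM.
rewrite E; split.

  have := integrableD measurableT IH1 iK.
  by apply: (eq_integrable measurableT) => x _ /=; rewrite EFinD.
rewrite RintegralD// IH2 big_ord_recr /=; congr (_ + _).
by rewrite RintegralZl//; exact: iX.
Qed.

Lemma mom0 : mom 0 = 1.
Proof.
rewrite /mom (_ : (fun x => X x ^+ 0) = cst 1); last first.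
  by apply/funext => x; rewrite expr0.
rewrite Rintegral_cst// mul1r.
by have := @probability_setT _ _ _ P; move=> /= ->.
Qed.

Lemma mom2_ge0 : 0 <= mom 2.
Proof. by apply: Rintegral_ge0 => x _; rewrite sqr_ge0. Qed.


Variable eps : R.
Hypothesis eps0 : 0 < eps.
Hypothesis m1 : mom 1 = 0.
Hypothesis hB : forall k, (3 <= k)%N ->
  `|mom k| <= 2^-1 * (k`!)%:R * eps ^+ (k - 2) * mom 2.

Lemma TB j : `|mom j.+2| / (j.+2)`!%:R <= 2^-1 * eps ^+ j * mom 2.
Proof.
case: j => [|j].
  rewrite ger0_norm ?mom2_ge0// expr0 mulr1 mulrC.
  by rewrite (_ : (2`!)%:R = 2 :> R).
have := hB (j.+3) isT; rewrite /= => h.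
rewrite ler_pdivrMr ?ltr0n ?fact_gt0//; apply: (le_trans h).
by rewrite le_eqVlt; apply/orP; left; apply/eqP; ring.
Qed.

Lemma BND (w : nat -> R) (nu : R) K : 0 <= nu ->
  `|\sum_(j < K) w j.+2 * nu ^+ j.+2 * mom j.+2 / (j.+2)`!%:R|
    <= nu ^+ 2 * mom 2 / 2 * \sum_(j < K) `|w j.+2| * (nu * eps) ^+ j.
Proof.
move=> nu0; apply: (le_trans (ler_norm_sum _ _ _)).
rewrite big_distrr /=; apply: ler_sum => j _.
have A0 : 0 <= `|w j.+2| * (nu ^+ j * nu ^+ 2).
  by rewrite mulr_ge0 // mulr_ge0 // exprn_ge0.
have -> : `|w j.+2 * nu ^+ j.+2 * mom j.+2 / (j.+2)`!%:R| =
    (`|w j.+2| * (nu ^+ j * nu ^+ 2)) * (`|mom j.+2| / (j.+2)`!%:R).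
  have e : nu ^+ j.+2 = nu ^+ j * nu ^+ 2 by rewrite -exprD addn2.
  rewrite e !normrM normfV (ger0_norm (ler0n _ _)) !normrX (ger0_norm nu0).
  by ring.
have -> : nu ^+ 2 * mom 2 / 2 * (`|w j.+2| * (nu * eps) ^+ j) =
   (`|w j.+2| * (nu ^+ j * nu ^+ 2)) * (2^-1 * eps ^+ j * mom 2).
  by rewrite exprMn; ring.
apply: ler_wpM2l => //. exact: TB.
Qed.

Definition MS (w : nat -> R) nu K := \sum_(k < K) w k * nu ^+ k * mom k / (k`!)%:R.

Lemma MS_split w nu K : MS w nu K.+2 =
  w 0%N + \sum_(j < K) w j.+2 * nu ^+ j.+2 * mom j.+2 / (j.+2)`!%:R.
Proof.
rewrite /MS !big_ord_recl /= mom0 m1.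
rewrite expr0 !mulr1 mulr0 mul0r add0r fact0 (_ : 1%:R = 1 :> R)// divr1.
by congr (_ + _); apply: eq_bigr => i _.
Qed.

Lemma MS_UB w nu W K : 0 <= nu -> nu * eps < 1 -> (forall k, `|w k.+2| <= W) ->
  MS w nu K.+2 <= w 0%N + nu ^+ 2 * mom 2 / 2 * (W / (1 - nu * eps)).
Proof.
move=> nu0 ne1 wW; rewrite MS_split lerD2l.
apply: (le_trans (ler_norm _)). apply: (le_trans (BND _ _ _ nu0)).
apply: ler_wpM2l; first by rewrite mulr_ge0 ?invr_ge0// mulr_ge0 ?mom2_ge0 ?exprn_ge0.
have ne0 : 0 <= nu * eps by rewrite mulr_ge0// ltW.
apply: (@le_trans _ _ (\sum_(j < K) W * (nu * eps) ^+ j)).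
  by apply: ler_sum => j _; rewrite ler_wpM2r ?exprn_ge0.
rewrite -big_distrr /=; apply: ler_wpM2l.
  by apply: (le_trans _ (wW 0%N)).
by apply: geom_le; rewrite ne0 ne1.
Qed.

Lemma MS_LB w nu K : 0 <= nu -> nu * eps < 1 -> (forall k, `|w k.+2| <= k.+1%:R) ->
  w 0%N - nu ^+ 2 * mom 2 / 2 * ((1 - nu * eps) ^+ 2)^-1 <= MS w nu K.+2.
Proof.
move=> nu0 ne1 wW; rewrite MS_split.
set S := \sum_(j < K) _.
suff h : - (nu ^+ 2 * mom 2 / 2 * ((1 - nu * eps) ^+ 2)^-1) <= S by lra.
rewrite lerNl; apply: (le_trans (ler_norm (- S))); rewrite normrN.
apply: (le_trans (BND _ _ _ nu0)).
apply: ler_wpM2l; first by rewrite mulr_ge0 ?invr_ge0// mulr_ge0 ?mom2_ge0 ?exprn_ge0.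
have ne0 : 0 <= nu * eps by rewrite mulr_ge0// ltW.
apply: (@le_trans _ _ (\sum_(j < K) j.+1%:R * (nu * eps) ^+ j)).
  by apply: ler_sum => j _; rewrite ler_wpM2r ?exprn_ge0.
by apply: geom2_le; rewrite ne0 ne1.
Qed.

End Var.
Arguments mom {d T R} P X k.
Arguments int_poly {d T R} P X.
Arguments mom0 {d T R} P X.
Arguments mom2_ge0 {d T R} P X.
Arguments MS {d T R} P X w nu K.
Arguments MS_UB {d T R} P X.
Arguments MS_LB {d T R} P X.
Section Var2.
Context d (T : measurableType d) (R : realType) (P : probability T R).
Local Notation int f := (Rintegral P setT f).
Variable X : T -> R.
Hypothesis mX : measurable_fun setT X.
Hypothesis iX : forall k, P.-integrable setT (fun x => (X x ^+ k)%:E).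
Variable eps : R.
Hypothesis eps0 : 0 < eps.
Hypothesis m1 : mom P X 1 = 0.
Hypothesis hB : forall k, (3 <= k)%N ->
  `|mom P X k| <= 2^-1 * (k`!)%:R * eps ^+ (k - 2) * mom P X 2.
Variable lam : R.
Hypothesis lam0 : 0 <= lam.
Hypothesis lame : lam < eps^-1.

Let lame' : lam * eps < 1.
Proof. have h := lame. by rewrite -(ltr_pM2r eps0) mulVf ?gt_eqF in h. Qed.

Lemma mS (f : T -> R) n : measurable_fun setT f ->
  measurable_fun setT (fun x => Sx (f x) n).
Proof.
move=> mf; rewrite /Sx; apply: measurable_sum => k.
by apply: measurable_funM; [exact: measurable_funX | exact: measurable_cst].
Qed.

Lemma mlin c : measurable_fun setT (fun x => c * X x).
Proof. by apply: measurable_funM => //; exact: measurable_cst. Qed.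

Lemma mexp c : measurable_fun setT (fun x => expR (c * X x)).
Proof. exact: (measurableT_comp (@measurable_expR R) (mlin c)). Qed.

Lemma pair_ge0 (y : R) n : 0 <= y ^+ n + (- y) ^+ n.
Proof.
rewrite exprNn -signr_odd; case: (boolP (odd n)) => hn.
  by rewrite expr1 mulN1r subrr.
by rewrite expr0 mul1r; have := exprn_even_ge0 y hn; lra.
Qed.

Lemma int_h (mu : R) : 0 <= mu -> mu * eps < 1 ->
  P.-integrable setT (EFin \o (fun x => expR (mu * X x) + expR ((- mu) * X x))).
Proof.
move=> mu0 mue.
set h := (fun x => expR (mu * X x) + expR ((- mu) * X x)).
pose g' n x := (Sx (mu * X x) n + Sx ((- mu) * X x) n)%:E.
have mg' n : measurable_fun setT (g' n).
  apply/measurable_realfun.measurable_EFinP => /=.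
  by apply: measurable_funD; apply: mS; apply: mlin.
have g'0 n x : setT x -> (0 <= g' n x)%E.
  move=> _; rewrite lee_fin /Sx -big_split /=; apply: sumr_ge0 => k _.
  rewrite -mulrDl mulr_ge0 ?invr_ge0// mulNr.
  exact: pair_ge0.
have nd x : setT x -> nondecreasing_seq (g'^~ x).
  move=> _; apply/nondecreasing_seqP => n; rewrite /g' lee_fin /Sx.
  rewrite !big_ord_recr /=.
  have := pair_ge0 (mu * X x) n; rewrite mulNr.
  have : 0 <= (n`!%:R : R)^-1 by rewrite invr_ge0.
  nra.
have := cvg_monotone_convergence (mu:=P) measurableT mg' g'0 nd.
have -> : (fun x => limn (g'^~ x)) = EFin \o h.
  apply/funext => x; apply/cvg_lim => //; rewrite /g'.
  apply: cvg_EFin; first exact: nearW.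
  by apply: cvgD; exact: Sx_cvg.
pose w k : R := 1 + (-1) ^+ k.
pose a k := w k * mu ^+ k / (k`!)%:R.
have int_eq n : (\int[P]_(x in setT) g' n x = (MS P X w mu n)%:E)%E.
  have [ip ie] := int_poly P X iX a 0 n.
  have -> : g' n = EFin \o (fun x => \sum_(k < n) a k * X x ^+ (k + 0)).
    apply/funext => x; rewrite /g' /= /Sx -big_split /=; congr (_%:E).
    apply: eq_bigr => k _; rewrite /a /w addn0 (exprMn _ mu) (exprMn _ (- mu)) (exprNn mu); ring.
  have fin := integrable_fin_num measurableT ip.
  transitivity ((int (fun x => \sum_(k < n) a k * X x ^+ (k + 0)))%:E).
    by rewrite /Rintegral fineK.
  congr (_%:E); rewrite [LHS]ie /MS; apply: eq_bigr => k _; rewrite /a addn0; ring.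
move=> cI; rewrite (eq_cvg _ _ int_eq) -(cvg_shiftn 2) in cI.
have wW k : `|w k.+2| <= 2.
  rewrite /w (le_trans (ler_normD _ _))// normr1 normrX normrN normr1 expr1n.
  by rewrite (_ : 1 + 1 = 2 :> R).
have HB : (\int[P]_(x in setT) (EFin \o h) x <=
   (w 0%N + mu ^+ 2 * mom P X 2 / 2 * (2 / (1 - mu * eps)))%:E)%E.
  rewrite -(cvg_lim _ cI) //; apply: lime_le.
    by apply/cvg_ex; eexists; exact: cI.
  apply: nearW => n /=; rewrite lee_fin addn2.
  exact: (MS_UB P X eps eps0 m1 hB w mu 2 n mu0 mue wW).
apply/integrableP; split.
  apply/measurable_EFinP; apply: measurable_funD; exact: mexp.
rewrite (eq_integral (fun x => (h x)%:E)); last first.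
  by move=> x _ /=; rewrite ger0_norm // /h addr_ge0 ?expR_ge0.
apply: (le_lt_trans HB); exact: ltry.
Qed.


Definition NS K := \sum_(k < K) lam ^+ k / (k`!)%:R * mom P X (k + 1).

Lemma MS_NS K : MS P X (fun=> 1) lam K.+1 - lam * NS K = MS P X (fun k => 1 - k%:R) lam K.+1.
Proof.
elim: K => [|K IH].
  by rewrite /MS /NS !big_ord1 big_ord0 /= subr0 mulr0 subr0.
rewrite /MS /NS in IH *.
rewrite !big_ord_recr /= in IH *.
have f0 : (K`!%:R : R) != 0 by rewrite pnatr_eq0 -lt0n fact_gt0.
have tt : 1 * lam ^+ K.+1 * mom P X K.+1 / (K.+1)`!%:R
   - lam * (lam ^+ K / K`!%:R * mom P X (K + 1))
   = (1 - K.+1%:R) * lam ^+ K.+1 * mom P X K.+1 / (K.+1)`!%:R.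
  rewrite addn1 factS natrM exprS.
  have k0 : (K.+1%:R : R) != 0 by rewrite pnatr_eq0.
  field; apply/andP; split; first by rewrite pnatr_eq0 -lt0n fact_gt0.
  by rewrite paddr_eq0 ?ler01 ?ler0n // oner_eq0.
lra.
Qed.

Lemma var_main :
  [/\ 1 <= int (fun x => expR (lam * X x)),
      int (fun x => expR (lam * X x)) <= 1 + lam ^+ 2 * mom P X 2 / (2 * (1 - lam * eps)) &
      1 - lam ^+ 2 * mom P X 2 / (2 * (1 - lam * eps) ^+ 2) <=
      int (fun x => expR (lam * X x)) - lam * int (fun x => X x * expR (lam * X x))].
Proof.
have [mu [mu0 lmu mue]] : exists mu, [/\ 0 <= mu, lam < mu & mu * eps < 1].
  exists ((lam + eps^-1)/2); have ? := lam0; have ? := lame.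
  have ? : 0 < eps^-1 by rewrite invr_gt0.
  split; try lra.
  have h : (lam + eps^-1)/2 < eps^-1 by lra.
  by rewrite -(ltr_pM2r eps0) mulVf ?gt_eqF in h.
pose del := mu - lam.
have del0 : 0 < del by rewrite /del subr_gt0.
pose h x := expR (mu * X x) + expR ((- mu) * X x).
have ih := int_h mu mu0 mue.
pose C := 1 + del^-1.
have C1 : 1 <= C by rewrite /C lerDl invr_ge0 ltW.
have ig : P.-integrable setT (EFin \o (fun x => C * h x)).
  have := integrableZl measurableT C ih.
  by apply: (eq_integrable measurableT) => x _ /=; rewrite EFinM.
have hge x : 0 <= h x by rewrite /h addr_ge0 ?expR_ge0.
have Ch x : h x <= C * h x by rewrite ler_peMl.
have bnd1 x : expR (mu * `|X x|) <= h x.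
  have := expR_abs_le (mu * X x); rewrite normrM (ger0_norm mu0) /h mulNr.
  by [].
have bndS K x : `|Sx (lam * X x) K| <= C * h x.
  apply: (le_trans (Sx_norm _ _)); apply: (le_trans (Sx_le _ _ (normr_ge0 _))).
  apply: (le_trans _ (Ch x)); apply: (le_trans _ (bnd1 x)).
  rewrite ler_expR normrM (ger0_norm lam0); apply: ler_wpM2r => //; exact: ltW.
have bndN K x : `|X x * Sx (lam * X x) K| <= C * h x.
  rewrite normrM.
  have S1 : `|Sx (lam * X x) K| <= expR (lam * `|X x|).
    apply: (le_trans (Sx_norm _ _)); rewrite (le_trans (Sx_le _ _ (normr_ge0 _)))//.
    by rewrite normrM (ger0_norm lam0).
  apply: (le_trans (ler_wpM2l (normr_ge0 _) S1)).
  have e1 : del * `|X x| <= expR (del * `|X x|).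
    by have := expR_ge1Dx (del * `|X x|); lra.
  have e2 : expR (mu * `|X x|) = expR (del * `|X x|) * expR (lam * `|X x|).
    by rewrite -expRD /del; congr expR; ring.
  have e3 : `|X x| * expR (lam * `|X x|) <= expR (mu * `|X x|) / del.
    rewrite ler_pdivlMr // e2.
    apply: le_trans (ler_wpM2r (expR_ge0 (lam * `|X x|)) e1).
    by rewrite le_eqVlt; apply/orP; left; apply/eqP; ring.
  apply: (le_trans e3); rewrite /C mulrDl mul1r.
  have : expR (mu * `|X x|) / del <= del^-1 * h x.
    rewrite mulrC; apply: ler_wpM2l; [by rewrite invr_ge0 ltW | exact: bnd1].
  have := hge x; have : 0 <= del^-1 * h x by rewrite mulr_ge0 ?invr_ge0 ?(ltW del0) ?hge.
  lra.
pose a k := lam ^+ k / (k`!)%:R.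
have [iM cM] := @DCR _ _ _ P (fun K x => Sx (lam * X x) K) (fun x => expR (lam * X x))
  (fun x => C * h x) (fun K => mS _ K (mlin lam)) (mexp lam) (fun x => Sx_cvg _) ig bndS.
have [iN cN] := @DCR _ _ _ P (fun K x => X x * Sx (lam * X x) K)
  (fun x => X x * expR (lam * X x))
  (fun x => C * h x) (fun K => measurable_funM mX (mS _ K (mlin lam)))
  (measurable_funM mX (mexp lam)) (fun x => cvgM (cvg_cst (X x)) (Sx_cvg (lam * X x))) ig bndN.
have eM K : int (fun x => Sx (lam * X x) K) = MS P X (fun=> 1) lam K.
  have [_ ie] := int_poly P X iX a 0 K.
  rewrite (_ : (fun x => Sx (lam * X x) K) = fun x => \sum_(k < K) a k * X x ^+ (k + 0)).
    by rewrite ie /MS; apply: eq_bigr => k _; rewrite /a addn0; ring.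
  by apply/funext => x; rewrite /Sx; apply: eq_bigr => k _; rewrite /a addn0 exprMn; ring.
have eN K : int (fun x => X x * Sx (lam * X x) K) = NS K.
  have [_ ie] := int_poly P X iX a 1 K.
  rewrite (_ : (fun x => X x * Sx (lam * X x) K) = fun x => \sum_(k < K) a k * X x ^+ (k + 1)).
    by rewrite ie /NS.
  apply/funext => x; rewrite /Sx big_distrr; apply: eq_bigr => k _.
  by rewrite /a addn1 exprMn exprS /=; ring.
rewrite (eq_cvg _ _ eM) in cM; rewrite (eq_cvg _ _ eN) in cN.
have ne : 1 - lam * eps != 0 by rewrite subr_eq0 (gt_eqF lame').
split.
- pose b k : R := if k is 0 then 1 else lam.
  have [ib ieb] := int_poly P X iX b 0 2.
  have <- : int (fun x => \sum_(k < 2) b k * X x ^+ (k + 0)) = 1.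
    by rewrite ieb big_ord_recr big_ord1 /= !addn0 mom0 m1; ring.
  apply: le_Rintegral => // x _.
  rewrite big_ord_recr big_ord1 /= !addn0 expr0 expr1 mulr1.
  by have := expR_ge1Dx (lam * X x); lra.
- have cM2 := cM; rewrite -(cvg_shiftn 2) in cM2.
  rewrite -(cvg_lim _ cM2)//; apply: limr_le.
    by apply/cvg_ex; eexists; exact: cM2.
  apply: nearW => K /=; rewrite addn2.
  have w1 : forall k, `|(fun=> 1 : R) k.+2| <= 1 by move=> k; rewrite normr1.
  apply: (le_trans (MS_UB P X eps eps0 m1 hB (fun=> 1) lam 1 K lam0 lame' w1)).
  by rewrite le_eqVlt; apply/orP; left; apply/eqP; field.
- have cU : (fun K => MS P X (fun=> 1) lam K.+1 - lam * NS K) @ \oo -->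
     int (fun x => expR (lam * X x)) - lam * int (fun x => X x * expR (lam * X x)).
    apply: cvgB; first by rewrite cvg_shiftS.
    exact: cvgM (cvg_cst lam) cN.
  rewrite (eq_cvg _ _ MS_NS) in cU.
  have cU2 := cU; rewrite -cvg_shiftS /= in cU2.
  rewrite -(cvg_lim _ cU2)//; apply: limr_ge.
    by apply/cvg_ex; eexists; exact: cU2.
  apply: nearW => K /=.
  have wW : forall k, `|(fun k => 1 - k%:R : R) k.+2| <= k.+1%:R.
    move=> k /=; rewrite (_ : 1 - k.+2%:R = - k.+1%:R :> R).
      by rewrite normrN ger0_norm.
    by rewrite -!natr1; ring.
  apply: le_trans (MS_LB P X eps eps0 m1 hB (fun k => 1 - k%:R) lam K lam0 lame' wW).
  by rewrite le_eqVlt; apply/orP; left; apply/eqP; field.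
Qed.

End Var2.
Section Real2.
Context {R : realType}.

Lemma ln_tan (u a : R) : 0 < u -> 0 < a -> ln u <= ln a + (u - a) / a.
Proof.
move=> u0 a0.
have h : -1 < u / a - 1.
  have : 0 < u / a by rewrite divr_gt0.
  lra.
have := le_ln1Dx h; rewrite addrC subrK ln_div ?posrE//.
have -> : (u - a) / a = u / a - 1 by field; rewrite gt_eqF.
lra.
Qed.

Lemma ln_lb (M : R) : 0 < M -> 1 - M^-1 <= ln M.
Proof.
move=> M0; have := @ln_tan 1 M ltr01 M0; rewrite ln1.
have -> : (1 - M) / M = M^-1 - 1 by field; rewrite gt_eqF.
lra.
Qed.

Lemma sum_aux n (s : 'I_n -> R) (K c : R) : c != 0 ->
  \sum_(i < n) (K * s i / (2 * c)) = n%:R * (K * (\sum_(i < n) s i) / (2 * n%:R * c)).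
Proof.
move=> c0; case: n s => [|n] s; first by rewrite !big_ord0 mul0r.
rewrite -big_distrl -big_distrr /=.
have n0 : (n.+1%:R : R) != 0 by rewrite pnatr_eq0.
field; apply/andP; split => //;
rewrite paddr_eq0 ?ler01 ?ler0n // oner_eq0.
Qed.

End Real2.

Theorem lemma2 (R : realType) (d : measure_display) (T : measurableType d)
  (P : probability T R) (n : nat) (xi : 'I_n -> {RV P >-> R}) (eps lam : R) :
  mutually_independent xi ->
  (* all moments exist *)
  (forall (i : 'I_n) (k : nat), P.-integrable setT (fun x => ((xi i x) ^+ k)%:E)) ->
  (forall i : 'I_n, ('E_P[xi i] = 0)%E) ->
  0 < eps ->
  (* Bernstein's condition *)
  (forall (i : 'I_n) (k : nat), (3 <= k)%N ->
     `| Ereal P (fun x => xi i x ^+ k) | <=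
       2^-1 * (k`!)%:R * eps ^+ (k - 2) * Ereal P (fun x => xi i x ^+ 2)) ->
  0 <= lam -> lam < eps^-1 ->
  [/\ Psi xi lam <=
        n%:R * ln (1 + lam ^+ 2 * sigma2 xi / (2 * n%:R * (1 - lam * eps))),
      n%:R * ln (1 + lam ^+ 2 * sigma2 xi / (2 * n%:R * (1 - lam * eps))) <=
        lam ^+ 2 * sigma2 xi / (2 * (1 - lam * eps))
    & - lam * Tn xi lam + Psi xi lam >=
        - (lam ^+ 2 * sigma2 xi / (2 * (1 - lam * eps) ^+ 6))].
Proof.
move=> _ iX hE eps0 hB lam0 lame.
pose M i := Ereal P (fun x => expR (lam * xi i x)).
pose N i := Ereal P (fun x => xi i x * expR (lam * xi i x)).
pose s i := Ereal P (fun x => xi i x ^+ 2).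
have key i : [/\ 1 <= M i, M i <= 1 + lam ^+ 2 * s i / (2 * (1 - lam * eps)) &
    1 - lam ^+ 2 * s i / (2 * (1 - lam * eps) ^+ 2) <= M i - lam * N i].
  rewrite /M /N /s !EerealE.
  have m1 : mom P (xi i) 1 = 0.
    rewrite /mom /Rintegral; under eq_integral do rewrite expr1.
    by have := hE i; rewrite unlock => ->.
  have hBi : forall k, (3 <= k)%N ->
      `|mom P (xi i) k| <= 2^-1 * (k`!)%:R * eps ^+ (k - 2) * mom P (xi i) 2.
    by move=> k k3; have := hB i k k3; rewrite !EerealE.
  have := @var_main _ _ _ P (xi i) (measurable_funPT (xi i)) (iX i) eps eps0 m1 hBi lam lam0 lame.
  by rewrite /mom.
have s0 i : 0 <= s i by rewrite /s EerealE; exact: mom2_ge0.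
have lame' : lam * eps < 1.
  by have h := lame; rewrite -(ltr_pM2r eps0) mulVf ?gt_eqF in h.
set c := 1 - lam * eps.
have c0 : 0 < c by rewrite /c subr_gt0.
have ne : c != 0 by rewrite gt_eqF.
have -> : Psi xi lam = \sum_(i < n) ln (M i) by [].
have -> : Tn xi lam = \sum_(i < n) (N i / M i) by [].
have -> : sigma2 xi = \sum_(i < n) s i by [].
set y := lam ^+ 2 * (\sum_(i < n) s i) / (2 * n%:R * c).
have hy : n%:R * y = \sum_(i < n) (lam ^+ 2 * s i / (2 * c)) by rewrite sum_aux.
have hS : \sum_(i < n) (lam ^+ 2 * s i / (2 * c)) = lam ^+ 2 * (\sum_(i < n) s i) / (2 * c).
  by rewrite -big_distrl -big_distrr.
have y0 : 0 <= y.
  rewrite /y mulr_ge0 ?invr_ge0 ?mulr_ge0 ?sumr_ge0 ?sqr_ge0 ?ler0n ?(ltW c0)//.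
have a0 : 0 < 1 + y by lra.
split.
- apply: (@le_trans _ _ (\sum_(i < n) (ln (1 + y) + (M i - (1 + y)) / (1 + y)))).
    apply: ler_sum => i _; apply: ln_tan => //.
    by have [h1 _ _] := key i; lra.
  rewrite big_split /= sumr_const card_ord -[_ *+ n]mulr_natl gerDl -big_distrl /=.
  apply: mulr_le0_ge0; last by rewrite invr_ge0 ltW.
  apply: (@le_trans _ _ (\sum_(i < n) (lam ^+ 2 * s i / (2 * c) - y))).
    apply: ler_sum => i _; have [_ h2 _] := key i.
    by move: h2; rewrite /c; lra.
  by rewrite sumrB sumr_const card_ord -hy mulr_natl subrr.
- apply: (@le_trans _ _ (n%:R * y)).
    have n0 : (0 : R) <= n%:R by exact: ler0n.
    have l1 : ln (1 + y) <= y by apply: le_ln1Dx; lra.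
    nra.
  by rewrite hy hS.
- rewrite [- lam * _]big_distrr -big_split /=.
  have -> : - (lam ^+ 2 * (\sum_(i < n) s i) / (2 * c ^+ 6)) =
      \sum_(i < n) - (lam ^+ 2 * s i / (2 * c ^+ 6)).
    by rewrite sumrN -big_distrl -big_distrr.
  apply: ler_sum => i _.
  have [M1 _ LB] := key i.
  set q := lam ^+ 2 * s i / (2 * c ^+ 2).
  have q0 : 0 <= q by rewrite /q mulr_ge0 ?invr_ge0 ?mulr_ge0 ?sqr_ge0 ?exprn_ge0 ?(ltW c0).
  have qq : q <= lam ^+ 2 * s i / (2 * c ^+ 6).
    rewrite /q; apply: ler_wpM2l; first by rewrite mulr_ge0 ?sqr_ge0.
    rewrite lef_pV2 ?posrE ?mulr_gt0 ?exprn_gt0 //.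
    apply: ler_wpM2l => //.
    have c1 : c <= 1 by rewrite /c; have := lam0; have := ltW eps0; nra.
    rewrite (_ : 6 = 2 + 4)%N // exprD ler_piMr ?exprn_ge0 ?(ltW c0) //.
    by rewrite exprn_ile1 ?(ltW c0).
  have M0 : 0 < M i by lra.
  have lnM := ln_lb _ M0.
  set r := (M i)^-1.
  have r0 : 0 <= r by rewrite /r invr_ge0 ltW.
  have r1 : r <= 1 by rewrite /r invf_le1.
  have rM : r * M i = 1 by rewrite /r mulVf ?gt_eqF.
  have LB' : 1 - q <= M i - lam * N i by [].
  rewrite -/r in lnM.
  have h1 : 0 <= r * (M i - lam * N i - 1 + q) by rewrite mulr_ge0 //; lra.
  have h2 : 0 <= (1 - r) * q by rewrite mulr_ge0 //; lra.
  have e1 : r * (M i - lam * N i - 1 + q) = r * M i - lam * (N i * r) - r + r * q by ring.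
  have e2 : (1 - r) * q = q - r * q by ring.
  rewrite e1 rM in h1; rewrite e2 in h2.
  rewrite -/r.
  lra.
Qed.
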